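(* Let $M$ be a matching of size $k$ and let $N$ be a matching of size $k+2$ having a separated pair $K$ such that $N-K$ equals $M$ up to cyclic relabeling. Then the connected component of $N$ in $\mathbf{DCM}_{k+2}$ has at least as many vertices as the connected component of $M$ in $\mathbf{DCM}_k$.
   Context: Let $k\ge 1$ and let $X_{2k}=\{P_1,\dots,P_{2k}\}$ be $2k$ points in convex position in the plane, labeled in clockwise cyclic order; indices are taken modulo $2k$. A matching of $X_{2k}$ means a set of $k$ pairwise non-crossing straight segments (edges) with endpoints in $X_{2k}$ covering every point exactly once; its size is $k$. Two matchings $M,M'$ of $X_{2k}$ are disjoint compatible if they have no common edge and no edge of $M$ crosses an edge of $M'$. $\mathbf{DCM}_k$ is the graph whose vertices are the matchings of $X_{2k}$, two being adjacent iff they are disjoint compatible. A block of a matching $M$ is a pair of edges $\{P_iP_{i+3},P_{i+1}P_{i+2}\}\subseteq M$; an antiblock is a pair of edges $\{P_iP_{i+1},P_{i+2}P_{i+3}\}\subseteq M$; a separated pair is a block or an antiblock. If $K$ is a separated pair of a matching $N$ of size $k+2$, then $N-K$ denotes the set $N\setminus K$, regarded as a matching of the remaining $2k$ points (which are in convex position) with their inherited cyclic order, i.e. as a matching of size $k$ defined up to cyclic relabeling. *)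

(* Defs.v *)
From mathcomp Require Import all_boot.
Set Implicit Arguments. Unset Strict Implicit. Unset Printing Implicit Defensive.

(* Points P_1..P_{2k} in convex position are indexed by 'I_(2*k) in clockwise
   cyclic order.  A matching is a fixed-point-free involution m (edge {i, m i})
   whose edges pairwise do not cross. *)

(* Chords {a,b} and {c,d} between points in convex position (labelled in
   cyclic order) cross (meet in their relative interiors) iff the four
   endpoints are distinct and exactly one of c,d lies strictly between a and b. *)
Definition cross (a b c d : nat) : bool :=
  [&& a != b, c != d, c \notin [:: a; b], d \notin [:: a; b] &
   ((minn a b < c < maxn a b) != (minn a b < d < maxn a b))].

Definition is_matching (k : nat) (m : {ffun 'I_(2 * k) -> 'I_(2 * k)}) : bool :=
  [forall i, (m i != i) && (m (m i) == i)] &&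
  [forall i : 'I_(2 * k), forall j : 'I_(2 * k), ~~ cross i (m i) j (m j)].

Definition matching (k : nat) := {m : {ffun 'I_(2 * k) -> 'I_(2 * k)} | is_matching m}.

Definition medge (k : nat) (M : matching k) (i : 'I_(2 * k)) : 'I_(2 * k) := val M i.

Definition dcm_adj (k : nat) : rel (matching k) := fun M M' =>
  [forall i, medge M i != medge M' i] &&
  [forall i : 'I_(2 * k), forall j : 'I_(2 * k), ~~ cross i (medge M i) j (medge M' j)].

Definition dcm_component (k : nat) (M : matching k) : {set matching k} :=
  [set M' | connect (@dcm_adj k) M M'].

(* Separated pairs of a matching N of size k+2 (on 2k+4 points), starting at
   the point of index i, i.e. involving points i, i+1, i+2, i+3 (mod 2k+4). *)
Definition is_block (k : nat) (N : matching (k + 2)) (i : nat) : Prop :=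
  (forall x : 'I_(2 * (k + 2)), val x = i %% (2 * (k + 2)) ->
     val (medge N x) = (i + 3) %% (2 * (k + 2))) /\
  (forall x : 'I_(2 * (k + 2)), val x = (i + 1) %% (2 * (k + 2)) ->
     val (medge N x) = (i + 2) %% (2 * (k + 2))).

Definition is_antiblock (k : nat) (N : matching (k + 2)) (i : nat) : Prop :=
  (forall x : 'I_(2 * (k + 2)), val x = i %% (2 * (k + 2)) ->
     val (medge N x) = (i + 1) %% (2 * (k + 2))) /\
  (forall x : 'I_(2 * (k + 2)), val x = (i + 2) %% (2 * (k + 2)) ->
     val (medge N x) = (i + 3) %% (2 * (k + 2))).

Definition is_separated_pair (k : nat) (N : matching (k + 2)) (i : nat) : Prop :=
  is_block N i \/ is_antiblock N i.

(* After removing the points i..i+3, the remaining 2k points of X_{2k+4}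
   are i+4, i+5, ..., i+2k+3 (mod 2k+4), in cyclic order.  Under a cyclic
   relabeling by r, label j of X_{2k} corresponds to the remaining point
   i + 4 + ((j + r) mod 2k)  (mod 2k+4). *)
Definition relabel (k i r j : nat) : nat :=
  (i + 4 + (j + r) %% (2 * k)) %% (2 * (k + 2)).

Definition minus_pair_eq (k : nat) (N : matching (k + 2)) (i : nat)
  (M : matching k) : Prop :=
  exists r : nat, forall (j : 'I_(2 * k)) (x : 'I_(2 * (k + 2))),
    val x = relabel k i r j -> val (medge N x) = relabel k i r (medge M j).

(* Main.v *)
Require Import Defs.
From mathcomp Require Import all_boot zify.
Set Implicit Arguments. Unset Strict Implicit. Unset Printing Implicit Defensive.

Definition btw a b c := (a < c < b) || (b < c < a).
Lemma crossE a b c d : cross a b c d = [&& a != b, c != d, c != a, c != b, d != a, d != b &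
   (btw a b c && ~~ btw a b d) || (~~ btw a b c && btw a b d)].
Proof. rewrite /cross /btw !inE; case: (c == a); case: (c==b); case: (d==a); case: (d==b); rewrite ?andbF ?andbT //=;
 case: (ltngtP a b) => H //=; apply/idP/idP; lia.
Qed.
Lemma succmod m x : x < m -> (x.+1 < m /\ x.+1 %% m = x.+1) \/ (x.+1 = m /\ x.+1 %% m = 0).
Proof. move=> H; case: (ltnP x.+1 m) => H'.
 by left; rewrite modn_small. right; have E : x.+1 = m by lia. by rewrite E modnn. Qed.
Lemma rot1 m a b c d : a < m -> b < m -> c < m -> d < m ->
  cross (a.+1 %% m) (b.+1 %% m) (c.+1 %% m) (d.+1 %% m) = cross a b c d.
Proof.
move=> Ha Hb Hc Hd. rewrite !crossE /btw.
move: (@succmod m a Ha) (@succmod m b Hb) (@succmod m c Hc) (@succmod m d Hd).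
generalize (a.+1 %% m) (b.+1 %% m) (c.+1 %% m) (d.+1 %% m) => a' b' c' d' A B C D.
case: A => [[? ->]|[? ->]]; case: B => [[? ->]|[? ->]]; case: C => [[? ->]|[? ->]]; case: D => [[? ->]|[? ->]];
 apply/idP/idP; lia.
Qed.
Lemma cross_rot m s a b c d : a < m -> b < m -> c < m -> d < m ->
  cross ((a + s) %% m) ((b + s) %% m) ((c + s) %% m) ((d + s) %% m) = cross a b c d.
Proof.
move=> Ha Hb Hc Hd; have Hm : 0 < m by lia.
elim: s => [|s IH]; first by rewrite !addn0 !modn_small.
have E x : (x + s.+1) %% m = ((x + s) %% m).+1 %% m by have := modnDml (x+s) 1 m; rewrite !addn1 addnS => ->.
by rewrite !E rot1 ?ltn_pmod.
Qed.
Lemma cross_shift s a b c d : cross (s + a) (s + b) (s + c) (s + d) = cross a b c d.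
Proof. rewrite !crossE /btw; apply/idP/idP; lia. Qed.
Lemma cross_sep1 L a b c d : a < L -> b < L -> L <= c -> L <= d -> ~~ cross a b c d.
Proof. move=> *; rewrite crossE /btw; lia. Qed.
Lemma cross_sep2 L a b c d : L <= a -> L <= b -> c < L -> d < L -> ~~ cross a b c d.
Proof. move=> *; rewrite crossE /btw; lia. Qed.

Section Transport.
Variable K : nat.
Local Notation T := 'I_(2*K).
Variables (g h : T -> T).
Hypothesis gK : cancel g h.
Hypothesis hK : cancel h g.
Hypothesis gX : forall a b c d : T, cross (g a) (g b) (g c) (g d) = cross a b c d.

Definition trf (f : {ffun T -> T}) : {ffun T -> T} := [ffun x => g (f (h x))].
Lemma trf_g f x : trf f (g x) = g (f x). Proof. by rewrite ffunE gK. Qed.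
Lemma trf_match f : is_matching f -> is_matching (trf f).
Proof.
case/andP => /forallP H1 /forallP H2; apply/andP; split.
- apply/forallP => x; rewrite -(hK x) !trf_g; case/andP: (H1 (h x)) => Ha /eqP Hb.
  by rewrite (inj_eq (can_inj gK)) Ha /= Hb.
- apply/forallP=> x; apply/forallP => y; rewrite -(hK x) -(hK y) !trf_g gX.
  exact: (forallP (H2 _)).
Qed.
Definition trM (M : matching K) : matching K := exist _ (trf (val M)) (trf_match (valP M)).
Lemma trM_g M x : medge (trM M) (g x) = g (medge M x).
Proof. by rewrite /medge /= trf_g. Qed.
Lemma trM_adj M M' : dcm_adj M M' -> dcm_adj (trM M) (trM M').
Proof.
case/andP => /forallP H1 /forallP H2; apply/andP; split.
- by apply/forallP => x; rewrite -(hK x) !trM_g (inj_eq (can_inj gK)).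
- apply/forallP=> x; apply/forallP => y; rewrite -(hK x) -(hK y) !trM_g gX.
  exact: (forallP (H2 _)).
Qed.
Lemma trM_inj : injective trM.
Proof.
move=> M M' E; apply: val_inj; apply/ffunP => x.
have := congr1 (fun Z => medge Z (g x)) E; rewrite !trM_g; exact: (can_inj gK).
Qed.
End Transport.

Definition rotI N s (x : 'I_N) : 'I_N := insubd x ((x + s) %% N).
Lemma rotIE N s (x : 'I_N) : val (rotI s x) = (x + s) %% N.
Proof. rewrite /rotI insubdK //; apply: ltn_pmod; exact: (leq_ltn_trans (leq0n _) (ltn_ord x)). Qed.
Lemma rotI_can N s : cancel (@rotI N s) (rotI (N - s %% N)).
Proof.
move=> x; apply: val_inj; rewrite !rotIE modnDml.
have HN : 0 < N by rewrite (leq_ltn_trans (leq0n _) (ltn_ord x)).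
have Hr := ltn_pmod s HN.
rewrite {1}(divn_eq s N).
have -> : x + (s %/ N * N + s %% N) + (N - s %% N) = (s %/ N).+1 * N + x.
  rewrite mulSn; move: (s %/ N * N) Hr => q; lia.
by rewrite modnMDl modn_small.
Qed.
Lemma rotI_can' N s : cancel (rotI (N - s %% N)) (@rotI N s).
Proof.
move=> x; apply: val_inj; rewrite !rotIE modnDml.
have HN : 0 < N by rewrite (leq_ltn_trans (leq0n _) (ltn_ord x)).
have Hr := ltn_pmod s HN.
rewrite {2}(divn_eq s N).
have -> : x + (N - s %% N) + (s %/ N * N + s %% N) = (s %/ N).+1 * N + x.
  rewrite mulSn; move: (s %/ N * N) Hr => q; lia.
by rewrite modnMDl modn_small.
Qed.
Lemma rotI_cross N s (a b c d : 'I_N) :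
  cross (rotI s a) (rotI s b) (rotI s c) (rotI s d) = cross a b c d.
Proof. by rewrite !rotIE cross_rot. Qed.

Definition rotM K s (M : matching K) : matching K :=
  trM (@rotI_can (2*K) s) (@rotI_can' (2*K) s) (@rotI_cross (2*K) s) M.
Lemma rotM_g K s M x : medge (@rotM K s M) (rotI s x) = rotI s (medge M x).
Proof. exact: trM_g. Qed.
Lemma rotM_adj K s M M' : dcm_adj M M' -> dcm_adj (@rotM K s M) (rotM s M').
Proof. exact: trM_adj. Qed.
Lemma rotM_inj K s : injective (@rotM K s).
Proof. exact: trM_inj. Qed.

Definition spec (b : bool) t := if b then 3 - t else (if odd t then t.-1 else t.+1).
Lemma spec_lt b t : t < 4 -> spec b t < 4.
Proof. by case: b; case: t => [|[|[|[|t]]]]. Qed.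
Lemma spec_inv b t : t < 4 -> spec b (spec b t) = t.
Proof. by case: b; case: t => [|[|[|[|t]]]]. Qed.
Lemma spec_neq b t : t < 4 -> spec b t != t.
Proof. by case: b; case: t => [|[|[|[|t]]]]. Qed.
Lemma spec_neq2 b t : t < 4 -> spec b t != spec (~~ b) t.
Proof. by case: b; case: t => [|[|[|[|t]]]]. Qed.
Lemma spec_nc b t u : t < 4 -> u < 4 -> ~~ cross t (spec b t) u (spec b u).
Proof. by case: b; case: t => [|[|[|[|t]]]]; case: u => [|[|[|[|u]]]]. Qed.
Lemma spec_nc2 b t u : t < 4 -> u < 4 -> ~~ cross t (spec b t) u (spec (~~b) u).
Proof. by case: b; case: t => [|[|[|[|t]]]]; case: u => [|[|[|[|u]]]]. Qed.

Section Ext.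
Variable k : nat.
Local Notation n := (2 * (k + 2)).
Local Notation m := (2 * k).

Definition Eval (f : {ffun 'I_m -> 'I_m}) b (x : 'I_n) : nat :=
  match (insub (nat_of_ord x) : option 'I_m) with Some j => nat_of_ord (f j) | None => m + spec b (x - m) end.
Lemma Eval_lt f b x : Eval f b x < n.
Proof.
rewrite /Eval; case: insubP => [j _ _|Hn].
- have := ltn_ord (f j); lia.
- have := ltn_ord x; have := @spec_lt b (x - m); move: Hn; rewrite -leqNgt; lia.
Qed.
Definition Ef f b : {ffun 'I_n -> 'I_n} := [ffun x => insubd x (Eval f b x)].
Lemma Ef_reg f b (j : 'I_m) (y : 'I_n) : y = j :> nat -> Ef f b y = f j :> nat.
Proof.
move=> E; rewrite ffunE insubdK; last exact: Eval_lt.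
rewrite /Eval; case: insubP => [j' _ Hj|Hn].
- move: Hj => /= Hj; by have -> : j' = j by apply: ord_inj; rewrite Hj.
- by move: Hn; rewrite E ltn_ord.
Qed.
Lemma Ef_spec f b (y : 'I_n) : m <= y -> Ef f b y = m + spec b (y - m) :> nat.
Proof.
move=> H; rewrite ffunE insubdK; last exact: Eval_lt.
rewrite /Eval; case: insubP => [j' Hl _|//]; move: Hl H => /=; lia.
Qed.
Lemma mn : m <= n. Proof. lia. Qed.
Lemma classify (y : 'I_n) : (exists j : 'I_m, y = j :> nat) \/ (m <= y /\ y - m < 4).
Proof.
case: (ltnP y m) => H; [left; by exists (Ordinal H) | right; have := ltn_ord y; lia].
Qed.
Lemma ordS (y : 'I_n) (t : nat) : y = m + t :> nat -> y - m = t. Proof. lia. Qed.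

Lemma Ef_match f b : is_matching f -> is_matching (Ef f b).
Proof.
case/andP => /forallP H1 /forallP H2; apply/andP; split.
- apply/forallP => x; case: (classify x) => [[j Ej]|[Hx Ht]].
  + have Ef1 := Ef_reg f b Ej.
    have Ej' : Ef f b x = f j :> nat by [].
    rewrite -!(inj_eq (@ord_inj _)) (Ef_reg f b Ej') Ef1 Ej.
    exact: (H1 j).
  + have Ef1 := Ef_spec f b Hx.
    have Hm : m <= Ef f b x by rewrite Ef1 leq_addr.
    rewrite -!(inj_eq (@ord_inj _)) (Ef_spec f b Hm) Ef1 addKn spec_inv //.
    rewrite subnKC //= eqxx andbT; have := spec_neq b Ht; lia.
- apply/forallP => x; apply/forallP => y.
  case: (classify x) => [[j Ej]|[Hx Ht]]; case: (classify y) => [[j' Ej']|[Hy Hu]].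
  + by rewrite (Ef_reg f b Ej) (Ef_reg f b Ej') Ej Ej'; exact: (forallP (H2 j)).
  + apply: (@cross_sep1 m); rewrite ?(Ef_reg f b Ej) ?(Ef_spec f b Hy) ?Ej ?ltn_ord ?leq_addr //.
  + apply: (@cross_sep2 m); rewrite ?(Ef_reg f b Ej') ?(Ef_spec f b Hx) ?Ej' ?ltn_ord ?leq_addr //.
  + rewrite (Ef_spec f b Hx) (Ef_spec f b Hy) -{1}(subnKC Hx) -{1}(subnKC Hy) cross_shift.
    exact: spec_nc.
Qed.
Definition E (M : matching k) b : matching (k + 2) := exist _ (Ef (val M) b) (Ef_match b (valP M)).

Lemma E_adj M M' b : dcm_adj M M' -> dcm_adj (E M b) (E M' (~~ b)).
Proof.
case/andP => /forallP H1 /forallP H2; apply/andP; split.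
- apply/forallP => x; rewrite /medge /=; case: (classify x) => [[j Ej]|[Hx Ht]].
  + by rewrite -(inj_eq (@ord_inj _)) /= (Ef_reg _ b Ej) (Ef_reg _ _ Ej) (inj_eq (@ord_inj _)); exact: H1.
  + rewrite -(inj_eq (@ord_inj _)) /= (Ef_spec _ b Hx) (Ef_spec _ _ Hx) eqn_add2l; exact: spec_neq2.
- apply/forallP => x; apply/forallP => y; rewrite /medge /=.
  case: (classify x) => [[j Ej]|[Hx Ht]]; case: (classify y) => [[j' Ej']|[Hy Hu]].
  + by rewrite (Ef_reg _ b Ej) (Ef_reg _ _ Ej') Ej Ej'; exact: (forallP (H2 j)).
  + apply: (@cross_sep1 m); rewrite ?(Ef_reg _ b Ej) ?(Ef_spec _ _ Hy) ?Ej ?ltn_ord ?leq_addr //.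
  + apply: (@cross_sep2 m); rewrite ?(Ef_reg _ _ Ej') ?(Ef_spec _ b Hx) ?Ej' ?ltn_ord ?leq_addr //.
  + rewrite (Ef_spec _ b Hx) (Ef_spec _ _ Hy) -{1}(subnKC Hx) -{1}(subnKC Hy) cross_shift.
    exact: spec_nc2.
Qed.

Lemma E_inj M M' b b' : E M b = E M' b' -> M = M'.
Proof.
move=> H; apply: val_inj; apply/ffunP => j; apply: val_inj.
have Ej : widen_ord mn j = j :> nat by [].
have := congr1 (fun Z => nat_of_ord (medge Z (widen_ord mn j))) H.
by rewrite /medge /= (Ef_reg _ b Ej) (Ef_reg _ b' Ej).
Qed.
End Ext.

Lemma npos k : 0 < 2 * (k + 2). Proof. lia. Qed.

Lemma invol K (N : matching K) x : medge N (medge N x) = x.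
Proof. by case/andP: (valP N) => /forallP H1 _; case/andP: (H1 x) => _ /eqP. Qed.

Lemma sep_val k (N : matching (k+2)) i b :
  (if b then is_block N i else is_antiblock N i) ->
  forall t (x : 'I_(2*(k+2))), t < 4 -> x = (i + t) %% (2*(k+2)) :> nat ->
  medge N x = (i + spec b t) %% (2*(k+2)) :> nat.
Proof.
set n := 2*(k+2) => Hb t x Ht Hx.
have aux : forall u v, u < 4 -> v < 4 -> (forall y : 'I_n, y = (i+u) %% n :> nat -> medge N y = (i+v) %% n :> nat) ->
   forall y : 'I_n, y = (i+v) %% n :> nat -> medge N y = (i+u) %% n :> nat.
  move=> u v _ _ H y Hy.
  have Hl : (i + u) %% n < n by apply: ltn_pmod; exact: npos.
  have := H (Ordinal Hl) erefl; rewrite -Hy => /ord_inj E.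
  by rewrite -E invol.
case: b Hb => [[H0 H1]|[H0 H1]].
- have H0' : forall y : 'I_n, y = (i+0) %% n :> nat -> medge N y = (i+3) %% n :> nat by move=> y; rewrite addn0; exact: H0.
  have H1' : forall y : 'I_n, y = (i+1) %% n :> nat -> medge N y = (i+2) %% n :> nat by exact: H1.
  move: Ht Hx; case: t => [|[|[|[|t]]]] //= _ Hx.
  + exact: H0'.
  + exact: H1'.
  + exact: (aux 1 2).
  + exact: (aux 0 3).
- have H0' : forall y : 'I_n, y = (i+0) %% n :> nat -> medge N y = (i+1) %% n :> nat by move=> y; rewrite addn0; exact: H0.
  have H1' : forall y : 'I_n, y = (i+2) %% n :> nat -> medge N y = (i+3) %% n :> nat by exact: H1.
  move: Ht Hx; case: t => [|[|[|[|t]]]] //= _ Hx.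
  + exact: H0'.
  + exact: (aux 0 1).
  + exact: H1'.
  + exact: (aux 2 3).
Qed.

Definition Lift k i r (M' : matching k) b : matching (k+2) := rotM (i+4) (E (rotM r M') b).

Lemma Lift_adj k i r M1 M2 b : dcm_adj M1 M2 -> dcm_adj (@Lift k i r M1 b) (Lift i r M2 (~~ b)).
Proof. move=> H; apply: rotM_adj; apply: E_adj; exact: rotM_adj. Qed.

Lemma Lift_inj k i r M1 M2 b1 b2 : @Lift k i r M1 b1 = Lift i r M2 b2 -> M1 = M2.
Proof. by move/rotM_inj/E_inj/rotM_inj. Qed.

Lemma shiftn k i u : (2*k + u + (i+4)) %% (2*(k+2)) = (i+u) %% (2*(k+2)).
Proof. have -> : 2*k+u+(i+4) = (i+u) + 2*(k+2) by lia. by rewrite modnDr. Qed.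

Lemma Lift_N k (M : matching k) (N : matching (k + 2)) i r :
  is_separated_pair N i ->
  (forall (j : 'I_(2 * k)) (x : 'I_(2 * (k + 2))),
    val x = relabel k i r j -> val (medge N x) = relabel k i r (medge M j)) ->
  exists b, Lift i r M b = N.
Proof.
move=> Hs Hr.
have [b Hb] : exists b, if b then is_block N i else is_antiblock N i.
  by case: Hs => H; [exists true | exists false].
exists b; apply: val_inj; apply/ffunP => x.
rewrite -(rotI_can' (i+4) x).
set y := rotI _ x.
have -> : val (Lift i r M b) (rotI (i + 4) y) = medge (Lift i r M b) (rotI (i + 4) y) by [].
rewrite rotM_g; apply: ord_inj; rewrite rotIE.
case: (classify y) => [[j Ej]|[Hy Ht]].
- rewrite /medge /= (Ef_reg _ b Ej).
  rewrite -(rotI_can' r j); set j0 := rotI _ j.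
  have -> : val (rotM r M) (rotI r j0) = medge (rotM r M) (rotI r j0) by [].
  rewrite rotM_g rotIE.
  have Hx : val (rotI (i+4) y) = relabel k i r j0.
    have Ej0 : (j0 + r) %% (2*k) = y by rewrite -rotIE /j0 rotI_can' Ej.
    by rewrite rotIE /relabel Ej0 addnC.
  have H := Hr j0 _ Hx; rewrite /relabel in H.
  by rewrite addnC; symmetry; exact: H.
- rewrite /medge /= (Ef_spec _ b Hy) shiftn.
  have Hx : rotI (i+4) y = (i + (y - 2*k)) %% (2*(k+2)) :> nat by rewrite rotIE -{1}(subnKC Hy) shiftn.
  symmetry; exact: (sep_val Hb Ht Hx).
Qed.

Unset Implicit Arguments.
Theorem mainTheorem9 (k : nat) (hk : 1 <= k) (M : matching k)
  (N : matching (k + 2)) (i : nat) :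
  is_separated_pair N i -> minus_pair_eq N i M ->
  #|dcm_component M| <= #|dcm_component N|.
Proof.
move=> Hs [r Hr].
have [b0 HN] := Lift_N Hs Hr.
have step : forall p x b, Lift i r x b \in dcm_component N -> path (@dcm_adj k) x p ->
    exists b', Lift i r (last x p) b' \in dcm_component N.
  elim=> [|y p IH] x b Hx /=; first by exists b.
  case/andP => Hxy Hp; apply: (IH y (~~ b)) => //.
  move: Hx; rewrite !inE => Hx; apply: (connect_trans Hx); apply: connect1; exact: Lift_adj.
have Hreach : forall M', M' \in dcm_component M -> exists b, Lift i r M' b \in dcm_component N.
  move=> M'; rewrite inE => /connectP [p Hp ->].
  by apply: (step p M b0) => //; rewrite HN inE connect0.
pose g M' := if Lift i r M' true \in dcm_component N then Lift i r M' true else Lift i r M' false.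
have gin : forall M', M' \in dcm_component M -> g M' \in dcm_component N.
  move=> M' H; case: (Hreach M' H) => [[] H']; rewrite /g; case: ifP => //.
  by rewrite H'.
have ginj : {in dcm_component M &, injective g}.
  move=> M1 M2 _ _; rewrite /g; case: ifP; case: ifP => _ _; exact: Lift_inj.
rewrite -(card_in_imset ginj); apply: subset_leq_card; apply/subsetP => y /imsetP [M' HM' ->].
exact: gin.
Qed.
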